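(* Let $R$ be a ring, $M$ a nonzero left $R$-module, $\Omega$ an infinite set, $N$ either $\bigoplus_{i\in\Omega} M$ or $\prod_{i\in\Omega} M$, and $E=\mathrm{End}_R(N)$. Let $(U_i)_{i\in I}$ be a family of subsets of $E$ with $\bigcup_{i\in I}U_i=E$ and $|I|\le|\Omega|$. Then there exist $i\in I$ and a moiety $\Sigma\subseteq\Omega$ such that $\Sigma$ is full with respect to $U_i$.
   Context: Rings are unital and associative; endomorphisms are written on the right of their arguments. For $\Sigma\subseteq\Omega$, $M^{\Sigma}$ denotes the $R$-submodule of $N$ consisting of elements supported on the coordinates in $\Sigma$ (so $N = M^{\Sigma}\oplus M^{\Omega\setminus\Sigma}$). For $U\subseteq E$, let $U_{\{\Sigma\}}=\{f\in U : M^{\Sigma}f\subseteq M^{\Sigma},\ M^{\Omega\setminus\Sigma}f\subseteq M^{\Omega\setminus\Sigma}\}$. A subset $\Sigma\subseteq\Omega$ is called full with respect to $U\subseteq E$ if every $R$-endomorphism of $M^{\Sigma}$ is the restriction to $M^{\Sigma}$ of some member of $U_{\{\Sigma\}}$. A subset $\Sigma\subseteq\Omega$ is a moiety if $|\Sigma|=|\Omega|=|\Omega\setminus\Sigma|$. *)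

(* Defs.v *)
From HB Require Import structures.
From mathcomp Require Import all_boot all_order all_algebra.
From mathcomp Require Import boolp classical_sets cardinality.
Set Implicit Arguments. Unset Strict Implicit. Unset Printing Implicit Defensive.
Import GRing.Theory.
Local Open Scope ring_scope.
Local Open Scope classical_set_scope.

(* Elements of N are represented as functions Omega -> M.
   prodN = true  : N = prod_{i in Omega} M  (all functions)
   prodN = false : N = (+)_{i in Omega} M   (finitely supported functions) *)
Definition inN (R : pzRingType) (M : lmodType R) (Omega : Type) (prodN : bool)
  (x : Omega -> M) : Prop :=
  if prodN then True else finite_set [set w | x w != 0].

Definition fadd (R : pzRingType) (M : lmodType R) (Omega : Type)
  (x y : Omega -> M) : Omega -> M := fun w => x w + y w.
Definition fscale (R : pzRingType) (M : lmodType R) (Omega : Type)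
  (a : R) (x : Omega -> M) : Omega -> M := fun w => a *: x w.

Definition MSub (R : pzRingType) (M : lmodType R) (Omega : Type) (prodN : bool)
  (Sigma : set Omega) : set (Omega -> M) :=
  [set x | inN prodN x /\ forall w, ~ Sigma w -> x w = 0].

Definition is_endo_on (R : pzRingType) (M : lmodType R) (Omega : Type)
  (A : set (Omega -> M)) (f : (Omega -> M) -> (Omega -> M)) : Prop :=
  [/\ (forall x, A x -> A (f x)),
      (forall x y, A x -> A y -> f (fadd x y) = fadd (f x) (f y)) &
      (forall a x, A x -> f (fscale a x) = fscale a (f x))].

(* An element of E is represented by a function on Omega -> M
   that is R-linear on N, maps N into N, and is 0 off N (this canonical
   normalisation makes the representation of End_R(N) bijective). *)
Definition EndN (R : pzRingType) (M : lmodType R) (Omega : Type) (prodN : bool)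
  : set ((Omega -> M) -> (Omega -> M)) :=
  [set f | is_endo_on (inN prodN) f /\ forall x, ~ inN prodN x -> f x = (fun _ => 0)].

Definition stab (R : pzRingType) (M : lmodType R) (Omega : Type) (prodN : bool)
  (U : set ((Omega -> M) -> (Omega -> M))) (Sigma : set Omega) :=
  [set f | U f /\ (forall x, MSub prodN Sigma x -> MSub prodN Sigma (f x))
                /\ (forall x, MSub prodN (~` Sigma) x -> MSub prodN (~` Sigma) (f x))].

Definition full (R : pzRingType) (M : lmodType R) (Omega : Type) (prodN : bool)
  (U : set ((Omega -> M) -> (Omega -> M))) (Sigma : set Omega) : Prop :=
  forall g, is_endo_on (MSub prodN Sigma) g ->
    exists2 f, stab prodN U Sigma f & forall x, MSub prodN Sigma x -> f x = g x.

Definition moiety (Omega : Type) (Sigma : set Omega) : Prop :=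
  (Sigma #= [set: Omega])%card /\ ((~` Sigma) #= [set: Omega])%card.

(* Main.v *)
Require Import Defs.
From HB Require Import structures.
From mathcomp Require Import all_boot all_order all_algebra.
From mathcomp Require Import boolp classical_sets cardinality functions.


Local Open Scope classical_set_scope.

Definition eps {T} (x0 : T) (P : T -> Prop) : T :=
  match pselect (exists x, P x) with left h => proj1_sig (cid h) | right _ => x0 end.
Lemma epsP T x0 (P : T -> Prop) : (exists x, P x) -> P (eps x0 P).
Proof. rewrite /eps; case: pselect => // h _; exact: (proj2_sig (cid h)). Qed.
Arguments epsP {T} x0 {P}.

Definition injon {X Y} (A : set X) (f : X -> Y) :=
  forall x y, A x -> A y -> f x = f y -> x = y.

Lemma card_trich X Y (A : set X) (B : set Y) (x0 : X) (y0 : Y) :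
 (exists f : X -> Y, (forall x, A x -> B (f x)) /\ injon A f) \/
 (exists g : Y -> X, (forall y, B y -> A (g y)) /\ injon B g).
Proof.
pose P (G : set (X * Y)) := [/\ (forall x y, G (x,y) -> A x /\ B y),
  (forall x y y', G (x,y) -> G (x,y') -> y = y') &
  (forall x x' y, G (x,y) -> G (x',y) -> x = x')].
have [Gm [[GAB Gf Gi] Gmax]] : exists G, P G /\ forall G', G `<` G' -> ~ P G'.
  apply: Zorn_bigcup => F FP Ftot; split.
  - by move=> x y [G FG Gxy]; have [+ _ _] := FP _ FG; apply.
  - move=> x y y' [G1 F1 G1x] [G2 F2 G2x].
    have [s12|s21] := Ftot _ _ F1 F2.
      by have [_ h _] := FP _ F2; apply: (h x); [apply: s12|].
    by have [_ h _] := FP _ F1; apply: (h x); [|apply: s21].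
  - move=> x x' y [G1 F1 G1x] [G2 F2 G2x].
    have [s12|s21] := Ftot _ _ F1 F2.
      by have [_ _ h] := FP _ F2; apply: (h _ _ y); [apply: s12|].
    by have [_ _ h] := FP _ F1; apply: (h _ _ y); [|apply: s21].
have [domA|] := pselect (forall x, A x -> exists y, Gm (x, y)).
  left; exists (fun x => eps y0 (fun y => Gm (x, y))); split.
    by move=> x /domA /(epsP y0) /GAB [].
  move=> x x' Ax Ax' e; apply: (Gi _ _ (eps y0 (fun y => Gm (x, y)))).
    exact: epsP (domA _ Ax).
  by rewrite e; exact: epsP (domA _ Ax').
move=> /existsNP [a /not_implyP [Aa na]].
have [ranB|] := pselect (forall y, B y -> exists x, Gm (x, y)).
  right; exists (fun y => eps x0 (fun x => Gm (x, y))); split.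
    by move=> y /ranB /(epsP x0) /GAB [].
  move=> y y' By By' e; apply: (Gf (eps x0 (fun x => Gm (x, y)))).
    exact: epsP (ranB _ By).
  by rewrite e; exact: epsP (ranB _ By').
move=> /existsNP [b /not_implyP [Bb nb]].
exfalso; apply: (Gmax (Gm `|` [set (a, b)])).
  split; first by move=> ? ?; left.
  by move=> /(_ (a, b)) h; apply: na; exists b; apply: h; right.
split.
- by move=> x y [/GAB//|[-> ->]].
- move=> x y y' [G1|/= [ex ey]] [G2|/= [ex' ey']]; subst.
  + exact: Gf G1 G2.
  + by case: na; eexists; exact: G1.
  + by case: na; eexists; exact: G2.
  + done.
- move=> x x' y [G1|/= [ex ey]] [G2|/= [ex' ey']]; subst.
  + exact: Gi G1 G2.
  + by case: nb; eexists; exact: G1.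
  + by case: nb; eexists; exact: G2.
  + done.
Qed.


Lemma card_le_fun T U (A : set T) (u0 : U) :
  (A #<= [set: U])%card -> exists f : T -> U, {in A &, injective f}.
Proof.
elim/Ppointed: U u0 => U u0; first by case: (no u0).
by move=> /pcard_injP.
Qed.
Arguments card_le_fun {T U A} u0.

Definition supp (T : Type) (G : set ((T * T) * T)) x :=
  exists p a, G (p, a) /\ (p.1 = x \/ p.2 = x \/ a = x).
Arguments supp {T}.
Definition W (T : Type) (G : set ((T * T) * T)) := [/\
  (forall p a a', G (p, a) -> G (p, a') -> a = a'),
  (forall p p' a, G (p, a) -> G (p', a) -> p = p') &
  (forall x y, supp G x -> supp G y -> exists a, G ((x, y), a))].
Arguments W {T}.

Lemma supp_sub (T : Type) (G G' : set ((T * T) * T)) x : G `<=` G' -> supp G x -> supp G' x.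
Proof. by move=> s [p [a [Gp h]]]; exists p, a; split => //; apply: s. Qed.
Arguments supp_sub {T G G' x}.

Lemma W_chain (T : Type) (F : set (set ((T * T) * T))) :
  (forall G, F G -> W G) -> total_on F subset -> W (\bigcup_(X in F) X).
Proof.
move=> FW Ftot; split.
- move=> p a a' [G1 F1 G1x] [G2 F2 G2x].
  have [s12|s21] := Ftot _ _ F1 F2.
    by have [h _ _] := FW _ F2; apply: (h p); [apply: s12|].
  by have [h _ _] := FW _ F1; apply: (h p); [|apply: s21].
- move=> p p' a [G1 F1 G1x] [G2 F2 G2x].
  have [s12|s21] := Ftot _ _ F1 F2.
    by have [_ h _] := FW _ F2; apply: (h _ _ a); [apply: s12|].
  by have [_ h _] := FW _ F1; apply: (h _ _ a); [|apply: s21].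
- move=> x y [p [a [[G1 F1 G1x] hx]]] [p' [a' [[G2 F2 G2x] hy]]].
  have sx : supp G1 x by exists p, a.
  have sy : supp G2 y by exists p', a'.
  have [s12|s21] := Ftot _ _ F1 F2.
    have [_ _ h] := FW _ F2; have [b Gb] := h x y (supp_sub s12 sx) sy.
    by exists b; exists G2.
  have [_ _ h] := FW _ F1; have [b Gb] := h x y sx (supp_sub s21 sy).
  by exists b; exists G1.
Qed.
Arguments W_chain {T F}.


Lemma hessenberg T : infinite_set [set: T] -> exists e : T * T -> T, injective e.
Proof.
move=> Tinf.
have [t0 _] := infinite_setN0 Tinf.
have [u uinj] : exists u : nat -> T, injective u.
  have := proj1 (infiniteP _) Tinf => /(card_le_fun t0) [u hu].
  by exists u => n m e; apply: hu; rewrite ?in_setT.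
have [pr prinj] : exists pr : nat * nat -> nat, injective pr.
  have := proj1 (card_eqPle _ _) card_nat2 => -[/(card_le_fun 0%N) [pr hp] _].
  by exists pr => n m e; apply: hp; rewrite ?in_setT.
pose G0 (q : (T * T) * T) := exists n m, q = ((u n, u m), u (pr (n, m))).
have suppG0 x : supp G0 x <-> exists n, x = u n.
  split.
    move=> [p [a [[n [m [ep ea]]] h]]]; subst p a.
    by case: h => [<-|[<-|<-]]; eexists.
  move=> [n ->]; exists (u n, u n), (u (pr (n, n))); split; last by left.
  by exists n, n.
have WG0 : W G0.
  split.
  - by move=> p a a' [n [m [-> ->]]] [n' [m' [[/uinj<- /uinj<-] ->]]].
  - move=> p p' a [n [m [-> ->]]] [n' [m' [-> /uinj/prinj [<- <-]]]].
    by [].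
  - move=> x y /suppG0 [n ->] /suppG0 [m ->].
    by exists (u (pr (n, m))); exists n, m.
pose P (G : set ((T * T) * T)) := W G /\ (G = set0 \/ G0 `<=` G).
have [Gm [[[Gf Gi Gc] G0m] Gmax]] :
    exists G, P G /\ forall G', G `<` G' -> ~ P G'.
  apply: Zorn_bigcup => F FP Ftot; rewrite /P; split.
    by apply: W_chain => // G FG; case: (FP _ FG).
  have [[X [FX XG0]]|nX] := pselect (exists X, F X /\ G0 `<=` X).
    by right; move=> q G0q; exists X => //; apply: XG0.
  left; apply/seteqP; split => // q [X FX Xq].
  have [_ [X0|XG0]] := FP _ FX; first by rewrite X0 in Xq.
  by case: nX; exists X.
have {G0m} G0m : G0 `<=` Gm.
  case: G0m => // Gm0; exfalso; apply: (Gmax G0); last by split => //; right.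
  rewrite Gm0; split => //; move=> /(_ ((u 0, u 0), u (pr (0, 0))%N)) h.
  by apply: h; exists 0%N, 0%N.
pose A := supp Gm.
pose fm (p : T * T) := eps t0 (fun a => Gm (p, a)).
have fmG x y : A x -> A y -> Gm ((x, y), fm (x, y)).
  by move=> Ax Ay; exact: (epsP t0 (Gc x y Ax Ay)).
have fmA x y : A x -> A y -> A (fm (x, y)).
  by move=> Ax Ay; exists (x, y), (fm (x, y)); split; [apply: fmG|right; right].
have fminj x y x' y' : A x -> A y -> A x' -> A y' -> fm (x, y) = fm (x', y') ->
    x = x' /\ y = y'.
  move=> Ax Ay Ax' Ay' e.
  have := Gi _ _ _ (fmG _ _ Ax Ay); rewrite e => /(_ _ (fmG _ _ Ax' Ay')).
  by case.
have uA n : A (u n).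
  by apply: (supp_sub G0m); apply/suppG0; exists n.
have u01 : u 0%N <> u 1%N by move=> /uinj.
have u02 : u 0%N <> u 2%N by move=> /uinj.
have u12 : u 1%N <> u 2%N by move=> /uinj.
have [[k [kA kinj]]|[g [gA ginj]]] := @card_trich _ _ A (~` A) t0 t0; last first.
  pose h z := fm (if pselect (A z) then (z, u 0%N) else (g z, u 1%N)).
  have hA z : A (h z).
    by rewrite /h; case: pselect => Az; apply: fmA => //; apply: gA.
  have hinj z z' : h z = h z' -> z = z'.
    rewrite /h; case: pselect => Az; case: pselect => Az' e.
    - by have [] := fminj _ _ _ _ Az (uA _) Az' (uA _) e.
    - by have [_ /u01] := fminj _ _ _ _ Az (uA _) (gA _ Az') (uA _) e.
    - by have [_ /esym/u01] := fminj _ _ _ _ (gA _ Az) (uA _) Az' (uA _) e.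
    - have [e1 _] := fminj _ _ _ _ (gA _ Az) (uA _) (gA _ Az') (uA _) e.
      exact: ginj e1.
  exists (fun p => fm (h p.1, h p.2)) => -[z w] [z' w'] /= e.
  have [/hinj -> /hinj ->] := fminj _ _ _ _ (hA z) (hA w) (hA z') (hA w') e.
  by [].
exfalso.
have GmA p a : Gm (p, a) -> [/\ A p.1, A p.2 & A a].
  by move=> G; split; exists p, a; split => //; [left|right;left|right;right].
pose B z := exists x, A x /\ k x = z.
pose kinv z := eps t0 (fun x => A x /\ k x = z).
have kinvP z : B z -> A (kinv z) /\ k (kinv z) = z.
  by move=> h; exact: (epsP t0 h).
have BA z : B z -> ~ A z by move=> [x [Ax <-]]; apply: kA.
pose kap z := if pselect (A z) then z else kinv z.
have kapA z : A z \/ B z -> A (kap z).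
  rewrite /kap; case: pselect => // Az [//|/kinvP []//].
have kapinj z z' : A z \/ B z -> A z' \/ B z' -> (A z <-> A z') ->
    kap z = kap z' -> z = z'.
  rewrite /kap; case: pselect => Az; case: pselect => Az' // Hz Hz' [h1 h2].
  - by case: Az'; apply: h1.
  - by case: Az; apply: h2.
  - case: Hz => // Bz; case: Hz' => // Bz' /= e.
    by rewrite -(proj2 (kinvP _ Bz)) -(proj2 (kinvP _ Bz')) e.
pose tg x y := if pselect (A x) then u 0%N else if pselect (A y) then u 1%N else u 2%N.
have tgA x y : A (tg x y).
  rewrite /tg; case: (pselect (A x)) => ?; first exact: uA.
  by case: (pselect (A y)) => ?; exact: uA.
pose l x y := k (fm (tg x y, fm (kap x, kap y))).
have lB x y : A x \/ B x -> A y \/ B y -> B (l x y).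
  move=> hx hy; exists (fm (tg x y, fm (kap x, kap y))); split => //.
  exact: (fmA _ _ (tgA x y) (fmA _ _ (kapA _ hx) (kapA _ hy))).
have linj x y x' y' : A x \/ B x -> A y \/ B y -> A x' \/ B x' -> A y' \/ B y' ->
    ~ (A x /\ A y) -> ~ (A x' /\ A y') -> l x y = l x' y' -> x = x' /\ y = y'.
  move=> hx hy hx' hy' nxy nxy' e.
  have := kinj _ _ (fmA _ _ (tgA x y) (fmA _ _ (kapA _ hx) (kapA _ hy)))
    (fmA _ _ (tgA x' y') (fmA _ _ (kapA _ hx') (kapA _ hy'))) e.
  move=> /(fminj _ _ _ _ (tgA _ _) (fmA _ _ (kapA _ hx) (kapA _ hy))
    (tgA _ _) (fmA _ _ (kapA _ hx') (kapA _ hy'))) [et /fminj].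
  move=> /(_ (kapA _ hx) (kapA _ hy) (kapA _ hx') (kapA _ hy')) [ex ey].
  have [iffx iffy] : (A x <-> A x') /\ (A y <-> A y').
    move: et; rewrite /tg.
    case: (pselect (A x)) => Ax; case: (pselect (A x')) => Ax';
    case: (pselect (A y)) => Ay; case: (pselect (A y')) => Ay' //;
    try (by move=> /u01); try (by move=> /esym/u01); try (by move=> /u02);
    try (by move=> /esym/u02); try (by move=> /u12); try (by move=> /esym/u12);
    try (by case: nxy); try (by case: nxy').
  by split; apply: kapinj.
pose New (q : (T * T) * T) :=
  exists x y, [/\ A x \/ B x, A y \/ B y, ~ (A x /\ A y) & q = ((x, y), l x y)].
have suppG' z : supp (Gm `|` New) z -> A z \/ B z.
  move=> [p [a [[/GmA [h1 h2 h3]|[x [y [hx hy _ [-> ->]]]]] hz]]].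
    by left; case: hz => [<-|[<-|<-]].
  by case: hz => [<-|[<-|<-]] //; right; apply: lB.
apply: (Gmax (Gm `|` New)).
  split; first by move=> q; left.
  move=> /(_ ((u 0%N, k (u 0%N)), l (u 0%N) (k (u 0%N)))) h.
  have : New ((u 0%N, k (u 0%N)), l (u 0%N) (k (u 0%N))).
    exists (u 0%N), (k (u 0%N)); split => //; first by left.
      by right; exists (u 0%N).
    by move=> [_ /BA]; apply; exists (u 0%N).
  move=> /(fun q => h (or_intror q)) /GmA [_ /= Ak _].
  exact: (kA _ (uA 0%N) Ak).
split; last by right; move=> q /G0m; left.
split.
- move=> p a a' [G1|[x [y [hx hy nxy ep]]]] [G2|[x' [y' [hx' hy' nxy' ep']]]].
  + exact: Gf G1 G2.
  + case: ep' => ? ?; subst; have [/= ? ? _] := GmA _ _ G1.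
    by case: nxy'.
  + case: ep => ? ?; subst; have [/= ? ? _] := GmA _ _ G2.
    by case: nxy.
  + case: ep => Ep Ea; case: ep' => Ep' Ea'; rewrite Ea Ea'.
    by move: Ep'; rewrite Ep => -[-> ->].
- move=> p p' a [G1|[x [y [hx hy nxy ep]]]] [G2|[x' [y' [hx' hy' nxy' ep']]]].
  + exact: Gi G1 G2.
  + case: ep' => _ Ea; rewrite Ea in G1; have [_ _ Al] := GmA _ _ G1.
    by case: (BA _ (lB _ _ hx' hy') Al).
  + case: ep => _ Ea; rewrite Ea in G2; have [_ _ Al] := GmA _ _ G2.
    by case: (BA _ (lB _ _ hx hy) Al).
  + case: ep => Ep Ea; case: ep' => Ep' Ea'; rewrite Ep Ep'.
    by have [-> ->] := linj _ _ _ _ hx hy hx' hy' nxy nxy' (etrans (esym Ea) Ea').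
- move=> x y /suppG' hx /suppG' hy.
  have [[Ax Ay]|nxy] := pselect (A x /\ A y).
    by exists (fm (x, y)); left; apply: fmG.
  by exists (l x y); right; exists x, y.
Qed.

Lemma disj_moieties (Omega I : Type) : infinite_set [set: Omega] ->
  ([set: I] #<= [set: Omega])%card ->
  exists S : I -> set Omega, (forall i, moiety (S i)) /\
    (forall i j w, S i w -> S j w -> i = j).
Proof.
move=> Oinf IO.
have [e einj] := hessenberg _ Oinf.
have [t0 _] := infinite_setN0 Oinf.
have [j jinj] := card_le_fun t0 IO.
have [a [b ab]] : exists a b : Omega, a <> b.
  have := proj1 (infiniteP _) Oinf => /(card_le_fun t0) [u hu].
  exists (u 0%N), (u 1%N) => /hu; rewrite !in_setT => /(_ isT isT).
  by [].
exists (fun i => (fun y => e (j i, y)) @` setT); split; last first.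
  move=> i i' w [y _ <-] [y' _ /einj [/jinj]].
  by rewrite !in_setT => /(_ isT isT).
move=> i; split.
  by apply: inj_card_eq => y y' _ _ /einj [].
apply/card_eqPle; split; first exact: card_leT.
pose w1 := if pselect (j i = a) then b else a.
have w1i : w1 <> j i.
  rewrite /w1; case: pselect => h /= e1; first by apply: ab; rewrite -h e1.
  by apply: h; rewrite e1.
have hf : ((fun y => e (w1, y)) @` setT #= [set: Omega])%card.
  by apply: inj_card_eq => y y' _ _ /einj [].
apply: (card_le_trans (B := (fun y => e (w1, y)) @` setT)).
  by move: hf => /card_eqPle [].
apply: subset_card_le => _ [y _ <-] [y' _ /einj [/esym]].
by [].
Qed.

Set Implicit Arguments. Unset Strict Implicit. Unset Printing Implicit Defensive.
Import GRing.Theory.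
Local Open Scope ring_scope.

Definition res (R : pzRingType) (M : lmodType R) (Omega : Type) (S : set Omega)
  (x : Omega -> M) : Omega -> M := fun w => if pselect (S w) then x w else 0.

Lemma inN_add (R : pzRingType) (M : lmodType R) (Omega : Type) (prodN : bool)
  (x y : Omega -> M) : inN prodN x -> inN prodN y -> inN prodN (fadd x y).
Proof.
rewrite /inN; case: prodN => // fx fy.
apply: (@sub_finite_set _ _ ([set w | x w != 0] `|` [set w | y w != 0])).
  move=> w /=; rewrite /fadd; have [->|] := eqVneq (x w) 0; last by left.
  by rewrite add0r; right.
by rewrite finite_setU.
Qed.

Lemma inN_scale (R : pzRingType) (M : lmodType R) (Omega : Type) (prodN : bool)
  a (x : Omega -> M) : inN prodN x -> inN prodN (fscale a x).
Proof.
rewrite /inN; case: prodN => // fx.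
apply: (sub_finite_set _ fx) => w /=.
by rewrite /fscale; have [->|//] := eqVneq (x w) 0; rewrite scaler0 eqxx.
Qed.

Lemma inN_res (R : pzRingType) (M : lmodType R) (Omega : Type) (prodN : bool)
  (S : set Omega) (x : Omega -> M) : inN prodN x -> inN prodN (res S x).
Proof.
rewrite /inN; case: prodN => // fx.
apply: (sub_finite_set _ fx) => w /=.
by rewrite /res; case: (pselect (S w)) => // _ /=; rewrite eqxx.
Qed.

Lemma MSub_res (R : pzRingType) (M : lmodType R) (Omega : Type) (prodN : bool)
  (S : set Omega) (x : Omega -> M) : inN prodN x -> MSub prodN S (res S x).
Proof.
move=> Nx; split; first exact: inN_res.
by move=> w nS; rewrite /res; case: pselect.
Qed.

Lemma res_id (R : pzRingType) (M : lmodType R) (Omega : Type) (prodN : bool)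
  (S : set Omega) (x : Omega -> M) : MSub prodN S x -> res S x = x.
Proof.
move=> [_ h]; apply: funext => w; rewrite /res; case: pselect => // nS.
by rewrite h.
Qed.

Lemma res_0 (R : pzRingType) (M : lmodType R) (Omega : Type) (prodN : bool)
  (S S' : set Omega) (x : Omega -> M) : MSub prodN S' x ->
  (forall w, S w -> ~ S' w) -> res S x = (fun _ => 0).
Proof.
move=> [_ h] dis; apply: funext => w; rewrite /res; case: pselect => // Sw.
by rewrite h //; apply: dis.
Qed.

Lemma res_add (R : pzRingType) (M : lmodType R) (Omega : Type)
  (S : set Omega) (x y : Omega -> M) : res S (fadd x y) = fadd (res S x) (res S y).
Proof.
by apply: funext => w; rewrite /res /fadd; case: (pselect (S w)) => // ?; rewrite addr0.
Qed.

Lemma res_scale (R : pzRingType) (M : lmodType R) (Omega : Type)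
  (S : set Omega) a (x : Omega -> M) : res S (fscale a x) = fscale a (res S x).
Proof.
by apply: funext => w; rewrite /res /fscale; case: (pselect (S w)) => // ?; rewrite scaler0.
Qed.

Lemma MSub0 (R : pzRingType) (M : lmodType R) (Omega : Type) (prodN : bool)
  (S : set Omega) : MSub prodN S (fun _ => 0 : M).
Proof.
split => //; rewrite /inN; case: prodN => //.
by apply: (sub_finite_set _ (finite_set0 Omega)) => w /=; rewrite eqxx.
Qed.

Lemma endo0 (R : pzRingType) (M : lmodType R) (Omega : Type) (prodN : bool)
  (S : set Omega) g : is_endo_on (MSub prodN S) g -> g (fun _ => 0 : M) = (fun _ => 0).
Proof.
move=> [_ gadd _]; have := gadd _ _ (MSub0 M prodN S) (MSub0 M prodN S).
have -> : fadd (fun _ : Omega => 0 : M) (fun _ => 0) = (fun _ => 0).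
  by apply: funext => w; rewrite /fadd addr0.
move=> e; apply: funext => w.
have := congr1 (fun f => f w) e; rewrite /fadd => e2.
by apply: (@addrI _ (g (fun _ => 0) w)); rewrite addr0 -e2.
Qed.

Definition idx (Omega I : Type) (S : I -> set Omega) (w : Omega) : option I :=
  match pselect (exists i, S i w) with
  | left h => Some (proj1_sig (cid h)) | right _ => None end.

Lemma idxP (Omega I : Type) (S : I -> set Omega) w i :
  (forall i j w, S i w -> S j w -> i = j) -> S i w -> idx S w = Some i.
Proof.
move=> dis Siw; rewrite /idx; case: pselect => [h|[]]; last by exists i.
by congr Some; apply: (dis _ _ w (proj2_sig (cid h))).
Qed.

Lemma idxS (Omega I : Type) (S : I -> set Omega) w i :
  idx S w = Some i -> S i w.
Proof.
by rewrite /idx; case: pselect => // h [<-]; exact: (proj2_sig (cid h)).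
Qed.

Lemma main_constr (R : pzRingType) (M : lmodType R) (Omega : Type) (prodN : bool)
  (I : Type) (S : I -> set Omega) (g : I -> (Omega -> M) -> (Omega -> M)) :
  (forall i j w, S i w -> S j w -> i = j) ->
  (forall i, is_endo_on (MSub prodN (S i)) (g i)) ->
  exists F, EndN prodN F /\ forall i,
    [/\ (forall x, MSub prodN (S i) x -> MSub prodN (S i) (F x)),
        (forall x, MSub prodN (~` S i) x -> MSub prodN (~` S i) (F x)) &
        (forall x, MSub prodN (S i) x -> F x = g i x)].
Proof.
move=> dis gE.
pose h (x : Omega -> M) w :=
  if idx S w is Some i then g i (res (S i) x) w else 0.
have hN x : inN prodN x -> inN prodN (h x).
  rewrite /inN; case E: prodN => // fx.
  pose K w := if idx S w is Some i then [set w' | g i (res (S i) x) w' != 0]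
              else set0.
  apply: (@sub_finite_set _ _ (\bigcup_(w in [set w | x w != 0]) K w)).
    move=> w' /=; rewrite /h; case E': (idx S w') => [i|]; last by rewrite eqxx.
    move=> nz.
    have [[w [Siw xw]]|nex] := pselect (exists w, S i w /\ x w != 0).
      by exists w => //; rewrite /K (idxP dis Siw).
    move: nz; have -> : res (S i) x = (fun _ => 0).
      apply: funext => w; rewrite /res; case: (pselect (S i w)) => // Siw.
      by apply/eqP; apply: contra_notT nex => xw; exists w.
    by rewrite (endo0 (gE i)) eqxx.
  apply: bigcup_finite => // w _; rewrite /K.
  case: (idx S w) => [i|]; last exact: finite_set0.
  have [gS _ _] := gE i.
  have := gS _ (MSub_res (S i) (x := x) _).
  rewrite /MSub /inN E => -[]; first exact: fx.
  by [].
have hadd x y : inN prodN x -> inN prodN y -> h (fadd x y) = fadd (h x) (h y).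
  move=> Nx Ny; apply: funext => w; rewrite /h /fadd.
  case: (idx S w) => [i|]; last by rewrite addr0.
  have [_ ga _] := gE i.
  by rewrite res_add (ga _ _ (MSub_res _ Nx) (MSub_res _ Ny)).
have hscale a x : inN prodN x -> h (fscale a x) = fscale a (h x).
  move=> Nx; apply: funext => w; rewrite /h /fscale.
  case: (idx S w) => [i|]; last by rewrite scaler0.
  have [_ _ gs] := gE i.
  by rewrite res_scale (gs _ _ (MSub_res _ Nx)).
have hz i x : MSub prodN (S i) x -> forall w, ~ S i w -> h x w = 0.
  move=> Mx w nS; rewrite /h; case E: (idx S w) => [j|] //.
  have Sjw := idxS E.
  rewrite (res_0 (S' := S i) Mx); last first.
    by move=> w' Sj Si; apply: nS; rewrite -(dis _ _ _ Sj Si).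
  by rewrite (endo0 (gE j)).
pose F x := if pselect (inN prodN x) then h x else (fun _ => 0).
have FN x : inN prodN x -> F x = h x.
  by rewrite /F; case: pselect.
exists F; split.
  split; last by move=> x nN; rewrite /F; case: pselect.
  split.
  - by move=> x Nx; rewrite FN //; apply: hN.
  - move=> x y Nx Ny; rewrite !FN //; [exact: hadd | exact: inN_add].
  - move=> a x Nx; rewrite !FN //; [exact: hscale | exact: inN_scale].
move=> i; split.
- move=> x Mx; rewrite FN; last by case: Mx.
  by split; [apply: hN; case: Mx | apply: hz].
- move=> x Mx; rewrite FN; last by case: Mx.
  split; first by apply: hN; case: Mx.
  move=> w /contrapT Siw; rewrite /h (idxP dis Siw).
  rewrite (res_0 (S' := ~` S i) Mx); last by move=> w' ? [].
  by rewrite (endo0 (gE i)).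
- move=> x Mx; rewrite FN; last by case: Mx.
  apply: funext => w; have [Siw|nSiw] := pselect (S i w).
    by rewrite /h (idxP dis Siw) (res_id Mx).
  rewrite (hz i) //; have [gS _ _] := gE i.
  by have [_ ->] := gS _ Mx.
Qed.

Theorem lemma2 (R : pzRingType) (M : lmodType R) (Omega : Type) (prodN : bool)
  (I : Type) (U : I -> set ((Omega -> M) -> (Omega -> M))) :
  (exists m : M, m != 0) ->
  infinite_set [set: Omega] ->
  ([set: I] #<= [set: Omega])%card ->
  (forall i, U i `<=` @EndN R M Omega prodN) ->
  \bigcup_i U i = @EndN R M Omega prodN ->
  exists i (Sigma : set Omega), moiety Sigma /\ full prodN (U i) Sigma.
Proof.
move=> _ Oinf IO Usub Ucup.
have [S [Smoi Sdis]] := @disj_moieties _ _ Oinf IO.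
have [[i fi]|nf] := pselect (exists i, full prodN (U i) (S i)).
  by exists i, (S i).
exfalso.
have : forall i, exists g, is_endo_on (MSub prodN (S i)) g /\
    ~ exists2 f, stab prodN (U i) (S i) f & forall x, MSub prodN (S i) x -> f x = g x.
  move=> i.
  have /existsNP [g /not_implyP [gE ng]] : ~ full prodN (U i) (S i).
    by move=> fi; apply: nf; exists i.
  by exists g.
move=> /choice [g hg].
have [F [FE FS]] := main_constr Sdis (fun i => (hg i).1).
have : (\bigcup_i U i) F by rewrite Ucup.
move=> [i _ Ui]; have [h1 h2 h3] := FS i.
by apply: (hg i).2; exists F => //; split.
Qed.
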